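(* Let $F$ be a field and $t,p$ positive integers with $p\mid t$. Let $M$ be a $t\times t$ $(t,p)$ block invertible square matrix over $F$, let $X$ be a $p\times t$ matrix over $F$ that is block invertible with block size $p$, and let $Y$ be a $t\times p$ matrix over $F$ that is block invertible with block size $p$. Suppose $W$ is an invertible $p\times p$ matrix over $F$ such that $XM^{-1}Y+W$ is invertible. Then the $(t+p)\times(t+p)$ matrix $$N=\begin{pmatrix} M & Y\\ X & XM^{-1}Y+W\end{pmatrix}$$ is a $(t+p,p)$ block invertible square matrix. Moreover, for any such $M,X,Y$, an invertible $W$ with $XM^{-1}Y+W$ invertible exists provided $p>1$.
   Context: For positive integers $a,b,p$ with $p\mid a$ and $p\mid b$, an $a\times b$ matrix (with $a$ rows and $b$ columns) over $F$ is partitioned into $p\times p$ blocks $B_{i,j}$, where $B_{i,j}$ is the submatrix formed by rows $(i-1)p+1,\dots,ip$ and columns $(j-1)p+1,\dots,jp$. Such a matrix is called block invertible (with block size $p$) if every block $B_{i,j}$ is invertible. An $n\times n$ matrix is an $(n,p)$ block invertible square matrix if it is block invertible with block size $p$ and is itself invertible. *)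

(* Defs.v *)
From HB Require Import structures.
From mathcomp Require Import all_boot all_order all_algebra.
Set Implicit Arguments. Unset Strict Implicit. Unset Printing Implicit Defensive.
Import GRing.Theory.
Local Open Scope ring_scope.

Lemma block_idx_lt (a p : nat) (i : 'I_(a %/ p)) (k : 'I_p) : (i * p + k < a)%N.
Proof.
have hk := ltn_ord k; have hi := ltn_ord i.
apply: (@leq_trans ((i.+1) * p)); first by rewrite mulSnr ltn_add2l.
by apply: (leq_trans (leq_mul hi (leqnn p))); rewrite leq_divM.
Qed.

Definition block_idx (a p : nat) (i : 'I_(a %/ p)) (k : 'I_p) : 'I_a :=
  Ordinal (block_idx_lt i k).

Definition mxblock_at (F : Type) (a b p : nat) (A : 'M[F]_(a, b))
  (i : 'I_(a %/ p)) (j : 'I_(b %/ p)) : 'M[F]_p :=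
  \matrix_(k < p, l < p) A (block_idx i k) (block_idx j l).

Definition block_invertible (F : fieldType) (a b p : nat) (A : 'M[F]_(a, b)) :=
  [/\ (p %| a)%N, (p %| b)%N &
      forall (i : 'I_(a %/ p)) (j : 'I_(b %/ p)), @mxblock_at F a b p A i j \in unitmx].

Definition block_invertible_sq (F : fieldType) (n p : nat) (A : 'M[F]_n) :=
  @block_invertible F n n p A /\ A \in unitmx.
Arguments mxblock_at {F a b} p A i j.
Arguments block_invertible {F a b} p A.
Arguments block_invertible_sq {F n} p A.

(* Main.v *)
Require Import Defs.
From HB Require Import structures.
From mathcomp Require Import all_boot all_order all_algebra zify ring.
Set Implicit Arguments. Unset Strict Implicit. Unset Printing Implicit Defensive.
Import GRing.Theory.
Local Open Scope ring_scope.

Definition shmx (F : fieldType) (p : nat) (d : 'I_p -> F) : 'M[F]_p :=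
  \matrix_(i, j) ((i == ordS j)%:R - (i == j)%:R * d j).

Lemma iter_ordS p (k : 'I_p) m : val (iter m (@ordS p) k) = ((k + m) %% p)%N.
Proof.
elim: m => [|m IH] /=; first by rewrite addn0 modn_small.
by rewrite IH addnS -addn1 modnDml addn1.
Qed.

Lemma sum_sel (F : fieldType) p (u : 'rV[F]_p) (a : 'I_p) c :
  \sum_i u 0 i * ((i == a)%:R * c) = u 0 a * c.
Proof.
rewrite (bigD1 a) //= eqxx mul1r big1 ?addr0 // => i /negbTE ->.
by rewrite mul0r mulr0.
Qed.

Lemma shmx_unit (F : fieldType) p (k : 'I_p) (d : 'I_p -> F) :
  d k = 0 -> shmx d \in unitmx.
Proof.
move=> dk.
have key : forall u : 'rV[F]_p, u *m shmx d = 0 -> u = 0.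
  move=> u hu.
  have E j : u 0 (ordS j) = u 0 j * d j.
    have := congr1 (fun A : 'rV_p => A 0 j) hu; rewrite !mxE.
    under eq_bigr do rewrite mxE mulrBr.
    rewrite sumrB.
    under eq_bigr do rewrite -[(_ == ordS j)%:R]mulr1.
    rewrite !sum_sel mulr1 => /eqP; rewrite subr_eq0 => /eqP.
    by [].
  have Z m : u 0 (iter m.+1 (@ordS p) k) = 0.
    elim: m => [|m IH]; first by rewrite /= E dk mulr0.
    by rewrite [iter _ _ _]/= E IH mul0r.
  apply/rowP => j; rewrite mxE.
  have hk := ltn_ord k.
  have -> : j = iter (p - k - 1 + j).+1 (@ordS p) k.
    apply: val_inj; rewrite iter_ordS.
    have -> : (k + (p - k - 1 + j).+1 = 1 * p + j)%N by lia.
    by rewrite modnMDl modn_small.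
  exact: Z.
rewrite -row_free_unit -kermx_eq0; apply/eqP/row_matrixP => r.
by rewrite row0; apply: key; rewrite -row_mul mulmx_ker row0.
Qed.

Lemma sum_units (F : fieldType) p (A : 'M[F]_p) :
  (1 < p)%N -> exists W : 'M[F]_p, W \in unitmx /\ A + W \in unitmx.
Proof.
move=> hp.
set r := \rank A.
pose c := fun j : 'I_p => ((j < r) && (j < p.-1))%N%:R : F.
exists (col_ebase A *m shmx c *m row_ebase A); split.
  rewrite !unitmx_mul col_ebase_unit row_ebase_unit andbT /=.
  have hk : (p.-1 < p)%N by case: (p) hp.
  apply: (@shmx_unit _ _ (Ordinal hk)).
  by rewrite /c /= ltnn andbF.
rewrite -{1}(mulmx_ebase A) -mulmxDl -mulmxDr.
have -> : pid_mx r + shmx c = shmx (fun j => c j - (j < r)%N%:R).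
  apply/matrixP => i j; rewrite !mxE.
  case: (eqVneq i j) => [->|ne]; last first.
    have -> : (nat_of_ord i == nat_of_ord j) = false by apply/negbTE.
    by rewrite /=; ring.
  by rewrite eqxx /=; ring.
rewrite !unitmx_mul col_ebase_unit row_ebase_unit andbT /=.
have hk : (0 < p)%N by case: (p) hp.
apply: (@shmx_unit _ _ (Ordinal hk)).
rewrite /c /=; case: (0 < r)%N => /=; last by rewrite subrr.
by rewrite (_ : (0 < p.-1)%N) ?subrr //; case: (p) hp => [|[]].
Qed.


Lemma bidx_cases t p (hp : (0 < p)%N) (hpt : (p %| t)%N) (i : 'I_((t+p)%/p)) :
  {i' : 'I_(t%/p) | forall k, block_idx i k = lshift p (block_idx i' k)}
  + {forall k : 'I_p, block_idx i k = rshift t k}.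
Proof.
case: (ltnP i (t%/p)) => h.
  by left; exists (Ordinal h) => k; apply: val_inj.
right => k; apply: val_inj => /=.
have e : ((t+p)%/p = t%/p + 1)%N by rewrite divnDr ?dvdnn // divnn hp.
have hi : (nat_of_ord i < t%/p + 1)%N by rewrite -e.
rewrite addn1 ltnS in hi.
have -> : nat_of_ord i = (t %/ p)%N by apply/eqP; rewrite eqn_leq hi h.
by rewrite divnK.
Qed.

Lemma bidx1 p (i : 'I_(p%/p)) (k : 'I_p) : block_idx i k = k.
Proof.
apply: val_inj => /=; have h : (nat_of_ord i < p %/ p)%N by [].
move: (nat_of_ord i) h => n h.
case: (posnP p) => [p0|hp]; first by move: (ltn_ord k); rewrite {2}p0.
move: h; rewrite divnn hp ltnS leqn0 => /eqP ->; by [].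
Qed.

Lemma blockN (F : fieldType) t p (hp : (0 < p)%N) (hpt : (p %| t)%N)
  (M : 'M[F]_t) (Y : 'M[F]_(t, p)) (X : 'M[F]_(p, t)) (D : 'M[F]_p) :
  block_invertible p M -> block_invertible p X -> block_invertible p Y ->
  D \in unitmx -> block_invertible p (block_mx M Y X D).
Proof.
move=> [_ _ hM] [_ _ hX] [_ _ hY] hD.
have hdp : (0 < p %/ p)%N by rewrite divnn hp.
pose o := Ordinal hdp.
split; try by rewrite dvdn_add ?dvdnn.
move=> i j.
case: (bidx_cases hp hpt i) => [[i' Hi]|Hi];
case: (bidx_cases hp hpt j) => [[j' Hj]|Hj].
- have -> : mxblock_at p (block_mx M Y X D) i j = mxblock_at p M i' j'.
    by apply/matrixP => k l; rewrite [LHS]mxE [RHS]mxE Hi Hj block_mxEul.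
  exact: hM.
- have -> : mxblock_at p (block_mx M Y X D) i j = mxblock_at p Y i' o.
    by apply/matrixP => k l; rewrite [LHS]mxE ?[RHS]mxE Hi Hj block_mxEur bidx1.
  exact: hY.
- have -> : mxblock_at p (block_mx M Y X D) i j = mxblock_at p X o j'.
    by apply/matrixP => k l; rewrite [LHS]mxE ?[RHS]mxE Hi Hj block_mxEdl bidx1.
  exact: hX.
- have -> : mxblock_at p (block_mx M Y X D) i j = D.
    by apply/matrixP => k l; rewrite [LHS]mxE ?[RHS]mxE Hi Hj block_mxEdr.
  exact: hD.
Qed.

Theorem mainTheorem3 (F : fieldType) (t p : nat)
  (ht : (0 < t)%N) (hp : (0 < p)%N) (hpt : (p %| t)%N)
  (M : 'M[F]_t) (X : 'M[F]_(p, t)) (Y : 'M[F]_(t, p))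
  (hM : block_invertible_sq p M)
  (hX : block_invertible p X) (hY : block_invertible p Y) :
  (forall W : 'M[F]_p, W \in unitmx ->
     (X *m invmx M *m Y + W) \in unitmx ->
     block_invertible_sq p (block_mx M Y X (X *m invmx M *m Y + W)))
  /\ ((1 < p)%N -> exists W : 'M[F]_p,
        W \in unitmx /\ (X *m invmx M *m Y + W) \in unitmx).
Proof.
case: hM => hMb hMu.
split; last by move=> h1; apply: sum_units.
move=> W hW hD; split; first exact: blockN.
have -> : block_mx M Y X (X *m invmx M *m Y + W) =
   block_mx 1%:M 0 (X *m invmx M) 1%:M *m block_mx M Y 0 W.
  rewrite mulmx_block !mul1mx !mul0mx ?mulmx0 !addr0 ?add0r ?mulmx1 ?mul1mx.
  by rewrite -[X *m invmx M *m M]mulmxA mulVmx // mulmx1.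
rewrite unitmx_mul !unitmxE det_lblock det_ublock !det1 mulr1 unitr1 /=.
by rewrite unitrM -!unitmxE hMu hW.
Qed.
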